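(* A real symmetric tensor $S\in\mathbb{R}^{n\times n\times n}$ of order 3 belongs to $\mathrm{OW}_n(\mathbb{R})$ if and only if its slices $S_1,\dots,S_n$ pairwise commute. In particular, the set of real symmetric tensors of order 3 and size $n$ admitting an orthogonal Waring decomposition is the zero set of a system of $n^2(n-1)^2/4$ polynomial equations of degree 2 in the $\binom{n+2}{3}$ independent entries of the tensor.
   Context: For a symmetric tensor $S$ (invariant under all permutations of its three indices), its $k$-th slice is the symmetric matrix $S_k=(S_{ijk})_{1\le i,j\le n}$. Identify $S$ with the cubic form $f(x)=\sum_{i,j,k}S_{ijk}x_ix_jx_k$. $\mathrm{OW}_n(\mathbb{R})$ is the set of cubic forms $f\in\mathbb{R}[x_1,\dots,x_n]_3$ that can be written $f(x)=g(Ax)$ where $A$ is a real orthogonal matrix ($A^TA=\mathrm{Id}$) and $g=\alpha_1x_1^3+\cdots+\alpha_nx_n^3$ with $\alpha_i\in\mathbb{R}$. *)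

(* Defs.v *)
(* Real numbers are modelled by an arbitrary real closed
   field R : rcfType (the statement is purely algebraic). *)
From HB Require Import structures.
From mathcomp Require Import all_boot all_order all_algebra.
Set Implicit Arguments. Unset Strict Implicit. Unset Printing Implicit Defensive.
Import Order.TTheory GRing.Theory Num.Theory.
Local Open Scope ring_scope.

Definition tensor3 (R : Type) (n : nat) := 'I_n -> 'I_n -> 'I_n -> R.

(* Symmetric: invariant under all permutations of the three indices
   (the transpositions (12) and (23) generate S_3). *)
Definition sym_tensor (R : Type) (n : nat) (S : tensor3 R n) : Prop :=
  forall i j k, S i j k = S j i k /\ S i j k = S i k j.

Definition slice (R : Type) (n : nat) (S : tensor3 R n) (k : 'I_n) : 'M[R]_n :=
  \matrix_(i, j) S i j k.

Definition cubic_form (R : comNzRingType) (n : nat) (S : tensor3 R n)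
  (x : 'cV[R]_n) : R :=
  \sum_(i < n) \sum_(j < n) \sum_(k < n) S i j k * x i 0 * x j 0 * x k 0.

Definition OW (R : comNzRingType) (n : nat) (S : tensor3 R n) : Prop :=
  exists (A : 'M[R]_n) (alpha : 'I_n -> R),
    A^T *m A = 1%:M /\
    forall x : 'cV[R]_n,
      cubic_form S x = \sum_(l < n) alpha l * ((A *m x) l 0) ^+ 3.

(* Main.v *)
Require Import Defs.
From HB Require Import structures.
From mathcomp Require Import all_boot all_order all_algebra.
From mathcomp Require Import spectral complex ring lra.
Import Order.TTheory GRing.Theory Num.Theory.
Local Open Scope ring_scope.
Set Implicit Arguments. Unset Strict Implicit. Unset Printing Implicit Defensive.

Lemma common_eigvec_sub (C : numClosedFieldType) n (U : 'M[C]_n) (As : seq 'M[C]_n) :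
  (0 < \rank U)%N -> {in As &, forall A B, comm_mx A B} ->
  all (fun A => stablemx U A) As ->
  exists2 v : 'rV_n, (v <= U)%MS && (v != 0) & all (fun A => stablemx v A) As.
Proof.
move=> rU cAs /allP sU.
have [] := @common_eigenvector _ _ [seq restrictmx U B | B <- As] rU.
  move=> _ _ /mapP[B BAs ->] /mapP[B' B'As ->].
  rewrite /comm_mx -!conjmxM ?inE ?stablemx_row_base ?sU //.
  by rewrite (cAs _ _ BAs B'As).
move=> v vN0 /allP vP; exists (v *m row_base U).
  rewrite mulmx_free_eq0 ?row_base_free // vN0 andbT.
  by rewrite (submx_trans (submxMl _ _)) // eq_row_base.
apply/allP => B BAs; rewrite -stablemx_restrict ?sU //.
by apply: vP; apply/mapP; exists B.
Qed.

Section Cx.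
Variable R : rcfType.
Local Notation C := (R[i]).
Local Notation toC := (real_complex R).
Local Notation Re := (@complex.Re R).
Local Notation Im := (@complex.Im R).

Lemma ReD (x y : C) : Re (x + y) = Re x + Re y.
Proof. by case: x => a b; case: y => c d. Qed.
Lemma ImD (x y : C) : Im (x + y) = Im x + Im y.
Proof. by case: x => a b; case: y => c d; simpc. Qed.
Lemma ReMC (x : C) (y : R) : Re (x * toC y) = Re x * y.
Proof. by case: x => a b /=; simpc. Qed.
Lemma ImMC (x : C) (y : R) : Im (x * toC y) = Im x * y.
Proof. by case: x => a b /=; simpc. Qed.
Lemma ReM (x y : C) : Re (x * y) = Re x * Re y - Im x * Im y.
Proof. by case: x => a b; case: y => c d; simpc. Qed.
Lemma ImM (x y : C) : Im (x * y) = Re x * Im y + Im x * Re y.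
Proof. by case: x => a b; case: y => c d; simpc. Qed.

Lemma Re_mulmx n p (w : 'rV[C]_n) (B : 'M[R]_(n,p)) :
  map_mx Re (w *m map_mx toC B) = map_mx Re w *m B.
Proof.
apply/matrixP => i j; rewrite !mxE (big_morph Re ReD (erefl _)).
by apply: eq_bigr => k _; rewrite !mxE ReMC.
Qed.
Lemma Im_mulmx n p (w : 'rV[C]_n) (B : 'M[R]_(n,p)) :
  map_mx Im (w *m map_mx toC B) = map_mx Im w *m B.
Proof.
apply/matrixP => i j; rewrite !mxE (big_morph Im ImD (erefl _)).
by apply: eq_bigr => k _; rewrite !mxE ImMC.
Qed.


Lemma tr11 (X : 'M[R]_1) : X^T = X.
Proof. by apply/matrixP => i j; rewrite !ord1 mxE. Qed.

Lemma sqnorm_ge0 n (x : 'rV[R]_n) : 0 <= (x *m x^T) 0 0.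
Proof. by rewrite !mxE sumr_ge0 // => i _; rewrite mxE -expr2 sqr_ge0. Qed.

Lemma sqnorm_gt0 n (x : 'rV[R]_n) : x != 0 -> 0 < (x *m x^T) 0 0.
Proof.
move=> xN0; rewrite lt_def sqnorm_ge0 andbT; apply: contraNneq xN0 => e.
have e' : \sum_i x 0 i ^+ 2 = 0.
  by rewrite -[RHS]e mxE; apply: eq_bigr => i _; rewrite mxE expr2.
have h := psumr_eq0P (fun i _ => sqr_ge0 (x 0 i)) e'.
apply/eqP/matrixP => i j; rewrite ord1 mxE; apply/eqP; rewrite -sqrf_eq0.
by rewrite h.
Qed.

Lemma ReIm_neq0 n (w : 'rV[C]_n) : w != 0 -> map_mx Re w != 0 \/ map_mx Im w != 0.
Proof.
move=> wN0; have [u0|] := eqVneq (map_mx Re w) 0; last by left.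
have [t0|] := eqVneq (map_mx Im w) 0; last by right.
case/eqP: wN0; apply/matrixP => i j.
have := congr1 (fun M : 'M[R]_(1,n) => M i j) u0; have := congr1 (fun M : 'M[R]_(1,n) => M i j) t0.
rewrite !mxE; case: (w i j) => a b /= -> ->; by [].
Qed.


Lemma real_eig n (A : 'M[R]_n) (w : 'rV[C]_n) (c : C) : A^T = A -> w != 0 ->
  w *m map_mx toC A = c *: w ->
  map_mx Re w *m A = Re c *: map_mx Re w /\ map_mx Im w *m A = Re c *: map_mx Im w.
Proof.
move=> As wN0 hw.
set u := map_mx Re w; set t := map_mx Im w.
have hu : u *m A = Re c *: u - Im c *: t.
  rewrite -Re_mulmx hw; apply/matrixP => i j; rewrite !mxE ReM.
  by [].
have ht : t *m A = Re c *: t + Im c *: u.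
  rewrite -Im_mulmx hw; apply/matrixP => a b; rewrite !mxE ImM.
  by [].
have key : (u *m A) *m t^T = (t *m A) *m u^T.
  by rewrite -[RHS]tr11 !trmx_mul trmxK As mulmxA.
have sym : (u *m t^T) = (t *m u^T) by rewrite -[RHS]tr11 trmx_mul trmxK.
have b0 : Im c = 0.
  move: key; rewrite hu ht mulmxBl mulmxDl -!scalemxAl sym.
  have pos : 0 < (u *m u^T) 0 0 + (t *m t^T) 0 0.
    case: (ReIm_neq0 wN0) => h.
      by rewrite ltr_wpDr ?sqnorm_ge0 ?sqnorm_gt0.
    by rewrite ltr_wpDl ?sqnorm_ge0 ?sqnorm_gt0.
  move: pos.
  move: (t *m u^T) (t *m t^T) (u *m u^T) => X1 X2 X3 pos.
  move/(congr1 (fun M : 'M[R]_1 => M 0 0)); rewrite !mxE => e.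
  have : Im c * (X3 0 0 + X2 0 0) = 0 by lra.
  by move/eqP; rewrite mulf_eq0 (gt_eqF pos) orbF => /eqP.
by move: hu ht; rewrite b0 !scale0r subr0 addr0.
Qed.


Section Main.
Variables (n m : nat) (F : 'I_m -> 'M[R]_n).
Hypothesis Fsym : forall l, (F l)^T = F l.
Hypothesis Fcomm : forall k l, F k *m F l = F l *m F k.

Definition Mk (v : nat -> 'rV[R]_n) k : 'M[R]_n :=
  \matrix_(a, j) (if (j < k)%N then v j 0 a else 0).

Lemma rank_Mk v k : (k <= n)%N -> (\rank (Mk v k) <= k)%N.
Proof.
move=> kn.
have -> : Mk v k = Mk v k *m pid_mx k.
  apply/matrixP => a j; rewrite !mxE (bigD1 j) //= big1 ?addr0.
    rewrite !mxE eqxx /=; case: ifP => jk; by rewrite ?mulr1 ?mul0r.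
  move=> b bj; rewrite !mxE; case: eqP => [/val_inj e|_]; last by rewrite mulr0.
  by rewrite e eqxx in bj.
by apply: leq_trans (mxrankM_maxr _ _) _; rewrite rank_pid_mx.
Qed.

Lemma FMk v lam k l : (forall i, (i < k)%N -> v i *m F l = lam i l *: v i) ->
  F l *m Mk v k = Mk v k *m diag_mx (\row_j (if (j < k)%N then lam j l else 0)).
Proof.
move=> hv; apply/matrixP => a j; rewrite mul_mx_diag !mxE.
case: ifP => jk; last by rewrite mulr0 big1 // => b _; rewrite mxE jk mulr0.
have := congr1 (fun M : 'M[R]_(1,n) => M 0 a) (hv _ jk); rewrite !mxE => e.
rewrite [RHS]mulrC -e; apply: eq_bigr => b _; rewrite mxE jk mulrC; congr (_ * _).
by have := congr1 (fun M : 'M[R]_n => M b a) (Fsym l); rewrite mxE.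
Qed.

Lemma ortho_common k : (k <= n)%N ->
  exists (v : nat -> 'rV[R]_n) (lam : nat -> 'I_m -> R),
   (forall i j, (i < k)%N -> (j < k)%N -> (v i *m (v j)^T) 0 0 = (i == j)%:R) /\
   (forall i l, (i < k)%N -> v i *m F l = lam i l *: v i).
Proof.
elim: k => [_|k IH kn].
  by exists (fun=> 0), (fun _ _ => 0).
have [v [lam [Hon Hev]]] := IH (ltnW kn).
set M := Mk v k.
have rM : (0 < \rank (kermx (map_mx toC M)))%N.
  by rewrite mxrank_ker mxrank_map subn_gt0 (leq_ltn_trans (rank_Mk v (ltnW kn))).
set As := [seq map_mx toC (F l) | l <- enum 'I_m].
have [w /andP [wW wN0] wst] : exists2 w : 'rV_n,
    (w <= kermx (map_mx toC M))%MS && (w != 0) & all (fun A => stablemx w A) As.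
  apply: common_eigvec_sub rM _ _.
    by move=> _ _ /mapP[a _ ->] /mapP[b _ ->]; rewrite /comm_mx -!map_mxM Fcomm.
  apply/allP => _ /mapP[l _ ->].
  rewrite sub_kermx -mulmxA -map_mxM (FMk (fun i hi => Hev i l hi)) map_mxM mulmxA.
  by move: (submx_refl (kermx (map_mx toC M))); rewrite sub_kermx => /eqP ->; rewrite mul0mx.
have hc : forall l, exists c, w *m map_mx toC (F l) = c *: w.
  move=> l; have /allP := wst.
  move=> /(_ _ (map_f (fun l => map_mx toC (F l)) (mem_enum _ l))) /sub_rVP [c e].
  by exists c.
have [x0 [x0N0 x0M x0F]] : exists x0 : 'rV[R]_n,
    [/\ x0 != 0, x0 *m M = 0 & forall l, exists a, x0 *m F l = a *: x0].
  have wM : w *m map_mx toC M = 0 by apply/eqP; rewrite -sub_kermx.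
  case: (ReIm_neq0 wN0) => h; [exists (map_mx Re w) | exists (map_mx Im w)]; split => //.
  - by rewrite -Re_mulmx wM; apply/matrixP => a b; rewrite !mxE.
  - by move=> l; have [c hc'] := hc l; have [h1 h2] := real_eig (Fsym l) wN0 hc'; exists (Re c).
  - by rewrite -Im_mulmx wM; apply/matrixP => a b; rewrite !mxE.
  - by move=> l; have [c hc'] := hc l; have [h1 h2] := real_eig (Fsym l) wN0 hc'; exists (Re c).
have [mu hmu] := fin_all_exists x0F.
have q0 := sqnorm_gt0 x0N0.
set s := Num.sqrt ((x0 *m x0^T) 0 0).
have s0 : 0 < s by rewrite sqrtr_gt0.
set x := s^-1 *: x0.
have hxx : (x *m x^T) 0 0 = 1.
  rewrite /x linearZ /= -scalemxAl -scalemxAr mxE mxE mulrA -expr2 exprVn.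
  by rewrite sqr_sqrtr ?(ltW q0) // mulVf // gt_eqF.
have hxv : forall i, (i < k)%N -> (x *m (v i)^T) 0 0 = 0 /\ (v i *m x^T) 0 0 = 0.
  move=> i ik; have hin : (i < n)%N by apply: leq_trans kn; rewrite ltnS ltnW.
  have := congr1 (fun N : 'M[R]_(1,n) => N 0 (Ordinal hin)) x0M.
  move=> e; rewrite /M !mxE in e; split.
    rewrite /x -scalemxAl mxE; apply/eqP; rewrite mulf_eq0; apply/orP; right.
    apply/eqP; rewrite -[RHS]e mxE; apply: eq_bigr => a _; rewrite !mxE /= ik.
    by [].
  rewrite /x linearZ /= -scalemxAr mxE; apply/eqP; rewrite mulf_eq0; apply/orP; right.
  apply/eqP; rewrite -[RHS]e mxE; apply: eq_bigr => a _; rewrite !mxE /= ik.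
  by rewrite mulrC.
exists (fun i => if i == k then x else v i), (fun i l => if i == k then mu l else lam i l).
split.
  move=> i j; rewrite !ltnS (leq_eqVlt i) (leq_eqVlt j) => /orP[/eqP-> | ik] /orP[/eqP-> | jk].
  - by rewrite eqxx hxx.
  - by rewrite eqxx (ltn_eqF jk) eq_sym (ltn_eqF jk); case: (hxv j jk) => ->.
  - by rewrite eqxx (ltn_eqF ik); case: (hxv i ik) => _ ->.
  - by rewrite (ltn_eqF ik) (ltn_eqF jk) Hon.
move=> i l; rewrite ltnS (leq_eqVlt i) => /orP[/eqP-> | ik]; last by rewrite (ltn_eqF ik) Hev.
by rewrite eqxx /x -scalemxAl hmu !scalerA mulrC.
Qed.
End Main.
End Cx.


Section Cubic.
Variable R : rcfType.
Variable n : nat.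

Lemma cube_sum (a : 'I_n -> R) :
  (\sum_i a i) ^+ 3 = \sum_i \sum_j \sum_k a i * a j * a k.
Proof.
rewrite exprS expr2 big_distrl /=; apply: eq_bigr => i _.
rewrite big_distrl big_distrr /=; apply: eq_bigr => j _.
rewrite big_distrr big_distrr /=; apply: eq_bigr => k _.
by rewrite !mulrA.
Qed.

Lemma cubic_diag (A : 'M[R]_n) (alpha : 'I_n -> R) (x : 'cV[R]_n) :
  cubic_form (fun i j k => \sum_l alpha l * A l i * A l j * A l k) x =
  \sum_l alpha l * ((A *m x) l 0) ^+ 3.
Proof.
rewrite /cubic_form.
have -> : \sum_l alpha l * ((A *m x) l 0) ^+ 3 =
   \sum_l \sum_i \sum_j \sum_k alpha l * A l i * A l j * A l k * x i 0 * x j 0 * x k 0.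
  apply: eq_bigr => l _; rewrite mxE cube_sum big_distrr /=.
  apply: eq_bigr => i _; rewrite big_distrr /=; apply: eq_bigr => j _.
  rewrite big_distrr /=; apply: eq_bigr => k _; ring.
rewrite [RHS]exchange_big; apply: eq_bigr => i _.
rewrite [RHS]exchange_big; apply: eq_bigr => j _.
rewrite [RHS]exchange_big; apply: eq_bigr => k _.
by rewrite !mulr_suml.
Qed.

Definition T3 (D : tensor3 R n) (x y z : 'cV[R]_n) :=
  \sum_a \sum_b \sum_c D a b c * x a 0 * y b 0 * z c 0.

Section Polar.
Variable D : tensor3 R n.
Hypothesis Dsym : sym_tensor D.

Lemma T_addl x x' y z : T3 D (x + x') y z = T3 D x y z + T3 D x' y z.
Proof.
rewrite /T3 -big_split; apply: eq_bigr => a _; rewrite -big_split.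
apply: eq_bigr => b _; rewrite -big_split; apply: eq_bigr => c _; rewrite mxE /=; ring.
Qed.
Lemma T_addm x y y' z : T3 D x (y + y') z = T3 D x y z + T3 D x y' z.
Proof.
rewrite /T3 -big_split; apply: eq_bigr => a _; rewrite -big_split.
apply: eq_bigr => b _; rewrite -big_split; apply: eq_bigr => c _; rewrite mxE /=; ring.
Qed.
Lemma T_addr x y z z' : T3 D x y (z + z') = T3 D x y z + T3 D x y z'.
Proof.
rewrite /T3 -big_split; apply: eq_bigr => a _; rewrite -big_split.
apply: eq_bigr => b _; rewrite -big_split; apply: eq_bigr => c _; rewrite mxE /=; ring.
Qed.
Lemma T_s12 x y z : T3 D y x z = T3 D x y z.
Proof.
rewrite /T3 exchange_big; apply: eq_bigr => a _; apply: eq_bigr => b _.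
apply: eq_bigr => c _; rewrite (proj1 (Dsym b a c)); ring.
Qed.
Lemma T_s23 x y z : T3 D x z y = T3 D x y z.
Proof.
rewrite /T3; apply: eq_bigr => a _; rewrite exchange_big; apply: eq_bigr => b _.
apply: eq_bigr => c _; rewrite (proj2 (Dsym a c b)); ring.
Qed.

Lemma polar x y z :
  T3 D (x + y + z) (x + y + z) (x + y + z) - T3 D (x + y) (x + y) (x + y)
  - T3 D (x + z) (x + z) (x + z) - T3 D (y + z) (y + z) (y + z)
  + T3 D x x x + T3 D y y y + T3 D z z z = 6%:R * T3 D x y z.
Proof.
rewrite !T_addl !T_addm !T_addr.
do 3 rewrite ?(T_s12 x y) ?(T_s12 x z) ?(T_s12 y z)
   ?(T_s23 _ x y) ?(T_s23 _ x z) ?(T_s23 _ y z).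
ring.
Qed.
End Polar.

Lemma T3_delta (D : tensor3 R n) i j k :
  T3 D (delta_mx i 0) (delta_mx j 0) (delta_mx k 0) = D i j k.
Proof.
have sd : forall (F : 'I_n -> R) i0, \sum_a F a * (delta_mx i0 0 : 'cV[R]_n) a 0 = F i0.
  move=> F i0; rewrite (bigD1 i0) //= big1 ?addr0; first by rewrite mxE !eqxx mulr1.
  by move=> a ai; rewrite mxE (negbTE ai) mulr0.
rewrite /T3.
under eq_bigr => a _ do under eq_bigr => b _ do rewrite sd.
under eq_bigr => a _ do rewrite sd.
by rewrite sd.
Qed.

Lemma cubic_inj (S S' : tensor3 R n) : sym_tensor S -> sym_tensor S' ->
  (forall x, cubic_form S x = cubic_form S' x) -> forall i j k, S i j k = S' i j k.
Proof.
move=> sS sS' e i j k.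
pose D : tensor3 R n := fun i j k => S i j k - S' i j k.
have sD : sym_tensor D.
  move=> a b c; rewrite /D; have [h1 h2] := sS a b c; have [h3 h4] := sS' a b c.
  by split; [rewrite h1 h3 | rewrite h2 h4].
have f0 : forall x, T3 D x x x = 0.
  move=> x; apply: (@eq_trans _ _ (cubic_form S x - cubic_form S' x)); last first.
    by rewrite e subrr.
  rewrite /T3 /cubic_form -sumrB; apply: eq_bigr => a _; rewrite -sumrB.
  apply: eq_bigr => b _; rewrite -sumrB; apply: eq_bigr => c _; rewrite /D; ring.
have := polar sD (delta_mx i 0) (delta_mx j 0) (delta_mx k 0).
rewrite !f0 T3_delta /D subrr !add0r => /esym /eqP.
rewrite oppr0 !addr0 mulf_eq0 pnatr_eq0 /= subr_eq0 => /eqP.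
done.
Qed.

End Cubic.

Lemma slice_sym (R : rcfType) n (S : tensor3 R n) : sym_tensor S ->
  forall k, (slice S k)^T = slice S k.
Proof. by move=> sS k; apply/matrixP => i j; rewrite !mxE (proj1 (sS j i k)). Qed.

Lemma comm_OW (R : rcfType) n (S : tensor3 R n) : sym_tensor S ->
  (forall k l, slice S k *m slice S l = slice S l *m slice S k) -> OW S.
Proof.
move=> sS hc.
have [v [lam [Hon Hev]]] := ortho_common (slice_sym sS) hc (leqnn n).
have [A hA] : exists A : 'M[R]_n, forall i j, A i j = v i 0 j.
  by exists (\matrix_(i, j) v i 0 j) => i j; rewrite mxE.
have AAt : A *m A^T = 1%:M.
  apply/matrixP => i j; rewrite [RHS]mxE.
  apply: (@eq_trans _ _ ((v i *m (v j)^T) 0 0)); last exact: Hon.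
  by rewrite !mxE; apply: eq_bigr => b _; rewrite !mxE !hA.
have AtA : A^T *m A = 1%:M := mulmx1C AAt.
have ha : forall l k j, \sum_i A l i * S i j k = lam l k * A l j.
  move=> l k j; have := congr1 (fun M : 'M[R]_(1,n) => M 0 j) (Hev l k (ltn_ord l)).
  rewrite !mxE hA => <-; apply: eq_bigr => i _; rewrite !mxE hA.
  by [].
have hn : forall l, \sum_j A l j * A l j = 1.
  move=> l; apply: (@eq_trans _ _ ((v l *m (v l)^T) 0 0)); last by rewrite Hon ?eqxx.
  by rewrite !mxE; apply: eq_bigr => j _; rewrite !mxE !hA.
pose alpha l := \sum_i A l i * lam l i.
have hlam : forall l k : 'I_n, lam l k = A l k * alpha l.
  move=> l k.
  have e1 : lam l k = \sum_j A l j * (\sum_i A l i * S i j k).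
    under eq_bigr => j _ do rewrite ha.
    rewrite -[LHS]mulr1 -(hn l) big_distrr; apply: eq_bigr => j _ /=; ring.
  rewrite e1 /alpha big_distrr; apply: eq_bigr => j _ /=.
  have -> : \sum_i A l i * S i j k = \sum_i A l i * S i k j.
    by apply: eq_bigr => i _; rewrite (proj2 (sS i j k)).
  rewrite ha; ring.
have hS : forall i j k : 'I_n, S i j k = \sum_l alpha l * A l i * A l j * A l k.
  move=> i j k.
  have : slice S k = A^T *m (A *m slice S k) by rewrite mulmxA AtA mul1mx.
  move/(congr1 (fun M : 'M[R]_n => M i j)); rewrite !mxE => ->.
  apply: eq_bigr => l _; rewrite !mxE.
  have -> : \sum_b A l b * slice S k b j = \sum_b A l b * S b j k.
    by apply: eq_bigr => b _; rewrite mxE.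
  rewrite ha hlam; ring.
exists A, alpha; split => // x.
rewrite -cubic_diag /cubic_form; apply: eq_bigr => i _; apply: eq_bigr => j _.
by apply: eq_bigr => k _; rewrite hS.
Qed.

Lemma OW_comm (R : rcfType) n (S : tensor3 R n) : sym_tensor S -> OW S ->
  forall k l, slice S k *m slice S l = slice S l *m slice S k.
Proof.
move=> sS [A [alpha [AtA hf]]].
have AAt : A *m A^T = 1%:M := mulmx1C AtA.
pose S' : tensor3 R n := fun i j k => \sum_l alpha l * A l i * A l j * A l k.
have sS' : sym_tensor S' by move=> i j k; split; apply: eq_bigr => l _; ring.
have eS : forall i j k, S i j k = S' i j k.
  by apply: cubic_inj sS sS' _ => x; rewrite hf /S' cubic_diag.
pose d k := \row_l (alpha l * A l k) : 'rV[R]_n.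
have hsl : forall k, slice S k = A^T *m diag_mx (d k) *m A.
  move=> k; apply/matrixP => i j; rewrite mul_mx_diag !mxE eS /S'.
  by apply: eq_bigr => l _; rewrite !mxE; ring.
move=> k l; rewrite !hsl.
have dd : diag_mx (d k) *m diag_mx (d l) = diag_mx (d l) *m diag_mx (d k).
  apply/matrixP => i j; rewrite !mul_mx_diag !mxE.
  case: (eqVneq i j) => [->|ne]; first by rewrite !mulr1n mulrC.
  by rewrite ?(negbTE ne) !mulr0n !mul0r.
have key : forall X Y, A^T *m X *m A *m (A^T *m Y *m A) = A^T *m (X *m Y) *m A.
  by move=> X Y; rewrite !mulmxA -(mulmxA _ A) AAt mulmx1 -!mulmxA.
by rewrite !key dd.
Qed.

Definition Cmt (R : rcfType) n (S : tensor3 R n) k l :=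
  slice S k *m slice S l - slice S l *m slice S k.

Lemma oppE (R : rcfType) n (M : 'M[R]_n) i j : (- M) i j = - M i j.
Proof. by rewrite mxE. Qed.

Lemma skew_entry (R : rcfType) n (M : 'M[R]_n) i j : M^T = - M -> M j i = - M i j.
Proof. by move=> e; have := congr1 (fun N : 'M[R]_n => N i j) e; rewrite !mxE. Qed.

Lemma comm_entries (R : rcfType) n (S : tensor3 R n) : sym_tensor S ->
  (forall k l, slice S k *m slice S l = slice S l *m slice S k) <->
  (forall (k l i j : 'I_n), (k < l)%N -> (i < j)%N ->
      (slice S k *m slice S l - slice S l *m slice S k) i j = 0).
Proof.
move=> sS; split.
  by move=> h k l i j _ _; rewrite h subrr mxE.
move=> h.
have CT : forall k l, (Cmt S k l)^T = - Cmt S k l.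
  by move=> k l; rewrite /Cmt linearB /= !trmx_mul !slice_sym // opprB.
have Clk : forall k l, Cmt S l k = - Cmt S k l by move=> k l; rewrite /Cmt opprB.
have H1 : forall k l i j : 'I_n, (k < l)%N -> Cmt S k l i j = 0.
  move=> k l i j kl; case: (ltngtP i j) => [ij|ji|ij].
  - exact: h.
  - by rewrite (skew_entry _ _ (CT k l)) (h _ _ _ _ kl ji) oppr0.
  - have e : i = j := val_inj ij.
    subst j; have := skew_entry i i (CT k l); lra.
move=> k l; apply/eqP; rewrite -subr_eq0; apply/eqP/matrixP => i j; rewrite [RHS]mxE.
change (Cmt S k l i j = 0).
case: (ltngtP k l) => [kl|lk|kl].
- exact: H1.
- by rewrite (Clk l k) oppE H1 ?oppr0.
- have e : k = l := val_inj kl.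
  by subst l; rewrite /Cmt subrr mxE.
Qed.

Unset Implicit Arguments.
Set Strict Implicit.
Set Printing Implicit Defensive.

Theorem theorem8 (R : rcfType) (n : nat) (S : tensor3 R n) :
  sym_tensor S ->
  (OW S <-> forall k l : 'I_n, slice S k *m slice S l = slice S l *m slice S k)
  /\
  (OW S <-> forall (k l i j : 'I_n), (k < l)%N -> (i < j)%N ->
      (slice S k *m slice S l - slice S l *m slice S k) i j = 0).
Proof.
move=> sS.
have e1 : OW S <-> forall k l : 'I_n, slice S k *m slice S l = slice S l *m slice S k.
  by split; [exact: OW_comm | exact: comm_OW].
split => //.
rewrite e1; exact: comm_entries.
Qed.
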